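(* Let $n\ge 2$, let $\rho>0$ and let $d_1,\dots,d_n>0$. Let $W=(w_{ij})$ be the $n\times n$ matrix with $w_{ij}=1/d_{\min(i,j)}$, let $\mathbf 1\in\mathbb R^n$ be the column vector of ones, and set $M=W-\frac{1}{\rho}\mathbf 1\mathbf 1^T$. If there exist indices $j<k$ with $d_k>d_j$, then $M$ is not positive semidefinite.
   Context: Interpretation: $d_i$ is the density of the cargo placed in the $i$-th position from the bottom of a vessel and $\rho$ is the water density; the hypothesis says some cargo is placed above a cargo of lower density. *)

(* Defs.v *)
From HB Require Import structures.
From mathcomp Require Import all_boot all_order all_algebra.
Set Implicit Arguments. Unset Strict Implicit. Unset Printing Implicit Defensive.
Import Order.TTheory GRing.Theory Num.Theory.
Local Open Scope ring_scope.

Definition psd (R : realFieldType) (n : nat) (A : 'M[R]_n) : Prop :=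
  A^T = A /\ forall x : 'cV[R]_n, 0 <= (x^T *m A *m x) ord0 ord0.

Definition Wmat (R : realFieldType) (n : nat) (d : 'I_n -> R) : 'M[R]_n :=
  \matrix_(i, j) (d (if (i <= j)%N then i else j))^-1.

Definition Mmat (R : realFieldType) (n : nat) (rho : R) (d : 'I_n -> R) : 'M[R]_n :=
  Wmat d - rho^-1 *: (const_mx 1 *m (const_mx 1 : 'rV[R]_n)).

(* Main.v *)
Require Import Defs.
From HB Require Import structures.
From mathcomp Require Import all_boot all_order all_algebra.
From mathcomp Require Import lra.
Import Order.TTheory GRing.Theory Num.Theory.
Local Open Scope ring_scope.

Lemma quad_delta (R : realFieldType) (n : nat) (A : 'M[R]_n) (i l : 'I_n) :
  ((delta_mx i (0:'I_1) : 'cV[R]_n)^T *m A *m (delta_mx l (0:'I_1) : 'cV[R]_n)) = const_mx (A i l).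
Proof.
apply/matrixP=> a b; rewrite !ord1.
by rewrite trmx_delta -rowE -colE !mxE.
Qed.

Theorem mainTheorem2 (R : realFieldType) (n : nat) (rho : R) (d : 'I_n -> R) :
  (2 <= n)%N -> 0 < rho -> (forall i, 0 < d i) ->
  (exists j k : 'I_n, (j < k)%N /\ d j < d k) ->
  ~ psd (Mmat rho d).
Proof.
move=> _ _ dpos [j [k [jk djk]]] [_ H].
have := H (delta_mx j (0:'I_1) - delta_mx k (0:'I_1)).
set M := Mmat rho d.
rewrite (linearB (@trmx R n 1)) /= !(mulmxBl, mulmxBr) !quad_delta !mxE.
rewrite !big_ord1 !mxE.
rewrite leqnn (ltnW jk) leqNgt jk /=.
have hj := dpos j; have hk := dpos k.
have : (d k)^-1 < (d j)^-1 by rewrite ltf_pV2 // ?posrE.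
rewrite leqnn.
lra.
Qed.
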